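(* Let $X$ be a real vector space, let $D \subseteq X$ be a convex set, and let $f: D \to \mathbf{R}\cup\{+\infty\}$ be radially lower semicontinuous. Then $f$ is convex, i.e. $f(\lambda x+(1-\lambda)y) \le \lambda f(x)+(1-\lambda)f(y)$ for all $x,y \in D$ and all $\lambda \in [0,1]$, if and only if for all $x,y \in D$ there exists $\lambda=\lambda(x,y) \in (0,1)$ such that $f(\lambda x+(1-\lambda)y) \le \lambda f(x)+(1-\lambda)f(y)$.
   Context: A function $f: D \to \mathbf{R}\cup\{+\infty\}$ on a convex subset $D$ of a real vector space is called radially lower semicontinuous if $f(x) \le \liminf_{t \downarrow 0} f(x+t(y-x))$ for all $x,y \in D$. Arithmetic in $\mathbf{R}\cup\{+\infty\}$ follows the usual conventions ($a+(+\infty)=+\infty$ for $a\in\mathbf{R}\cup\{+\infty\}$, $c\cdot(+\infty)=+\infty$ for $c>0$, and $0\cdot(+\infty)=0$). *)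

(* Defs.v *)
From HB Require Import structures.
From mathcomp Require Import all_boot all_order all_algebra.
From mathcomp Require Import all_classical all_reals all_analysis.
Set Implicit Arguments. Unset Strict Implicit. Unset Printing Implicit Defensive.
Import Order.TTheory GRing.Theory Num.Theory.
Import numFieldNormedType.Exports.
Local Open Scope classical_set_scope.
Local Open Scope ring_scope.
Local Open Scope ereal_scope.

Definition convex_subset (R : realType) (X : lmodType R) (D : set X) : Prop :=
  forall (x y : X) (l : R), D x -> D y -> (0 <= l <= 1)%R ->
    D (l *: x + (1 - l) *: y)%R.

Definition radially_lsc (R : realType) (X : lmodType R) (D : set X)
    (f : X -> \bar R) : Prop :=
  forall x y : X, D x -> D y ->
    f x <= limf_einf (fun t : R => f (x + t *: (y - x))%R) (at_right (0:R)).

(* Main.v *)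
Require Import Defs.
From HB Require Import structures.
From mathcomp Require Import all_boot all_order all_algebra.
From mathcomp Require Import all_classical all_reals all_analysis.
From mathcomp Require Import ring lra.
Import Order.TTheory GRing.Theory Num.Theory.
Import numFieldNormedType.Exports.
Local Open Scope classical_set_scope.
Local Open Scope ring_scope.

Lemma sup_step (R : realType) (P : R -> Prop) (t0 : R) :
  0 <= t0 -> ~ P 0 -> P t0 ->
  (forall t, 0 < t <= t0 -> P t -> exists2 d, 0 < d & forall s, t - d < s < t -> P s) ->
  exists a, [/\ 0 <= a < t0, ~ P a & forall s, a < s <= t0 -> P s].
Proof.
move=> t00 nP0 Pt0 op.
pose A := [set s | 0 <= s <= t0 /\ ~ P s].
have A0 : A 0 by split => //; rewrite lexx t00.
have hs : has_sup A.
  split; first by exists 0.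
  by exists t0 => s [/andP[_ ->]].
have ub := sup_upper_bound hs.
have a0 : 0 <= sup A by exact: ub.
have at0 : sup A <= t0 by apply: ge_sup; [exists 0|move=> s [/andP[_ ->]]].
have nPa : ~ P (sup A).
  move=> Pa.
  have apos : 0 < sup A.
    rewrite lt_neqAle a0 andbT; apply/eqP => h; apply: nP0; by rewrite h.
  have [d d0 Hd] := op _ (introT andP (conj apos at0)) Pa.
  have [e [/andP[e0 et0] nPe] de] := sup_adherent d0 hs.
  have ea : e <= sup A := ub _ (conj (introT andP (conj e0 et0)) nPe).
  move: ea; rewrite le_eqVlt => /orP[/eqP ea|ea].
    by apply: nPe; rewrite ea.
  by apply: nPe; apply: Hd; rewrite de ea.
exists (sup A); split => //.
  rewrite a0 /= lt_neqAle at0 andbT; apply/eqP => h; apply: nPa; by rewrite h.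
move=> s /andP[as0 st0]; apply/not_notP => nPs.
have : s <= sup A.
  apply: ub; split => //; rewrite st0 andbT; exact: (le_trans a0 (ltW as0)).
by rewrite leNgt as0.
Qed.

Lemma inf_step (R : realType) (P : R -> Prop) (t0 : R) :
  t0 <= 1 -> ~ P 1 -> P t0 ->
  (forall t, t0 <= t < 1 -> P t -> exists2 d, 0 < d & forall s, t < s < t + d -> P s) ->
  exists b, [/\ t0 < b <= 1, ~ P b & forall s, t0 <= s < b -> P s].
Proof.
move=> t01 nP1 Pt0 op.
have h1 : 0 <= 1 - t0 by rewrite subr_ge0.
have h2 : ~ P (1 - 0) by rewrite subr0.
have h3 : P (1 - (1 - t0)) by have -> : 1 - (1 - t0) = t0 by lra.
have h4 : forall u, 0 < u <= 1 - t0 -> P (1 - u) ->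
    exists2 d, 0 < d & forall s, u - d < s < u -> P (1 - s).
  move=> u /andP[u0 ut0] Pu.
  have [|d d0 Hd] := op (1 - u) _ Pu.
    apply/andP; split; lra.
  exists d => // s /andP[s1 s2]; apply: Hd; apply/andP; split; lra.
have [a [/andP[a0 at0] nPa Ha]] := @sup_step R (fun u => P (1 - u)) (1 - t0) h1 h2 h3 h4.
exists (1 - a); split.
- apply/andP; split; lra.
- by [].
- move=> s /andP[s1 s2].
  have := Ha (1 - s); have -> : 1 - (1 - s) = s by lra. apply; apply/andP; split; lra.
Qed.
Local Open Scope ereal_scope.
Lemma lemK (R : realType) (X : lmodType R) (D : set X) (f : X -> \bar R)
  (hrl : radially_lsc D f) z w (e : R) : D z -> D w -> e%:E < f z ->
  exists2 d : R, (0 < d)%R & forall s : R, (0 < s < d)%R ->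
     e%:E < f (z + s *: (w - z))%R.
Proof.
move=> Dz Dw ef.
have := lt_le_trans ef (hrl z w Dz Dw).
rewrite limf_einfE => /ereal_sup_gt [_ [V HV <-]] eV.
move: HV; rewrite /at_right /within /= => /nbhs_ballP [d /= d0 Hd].
exists d => // s /andP[s0 sd].
apply: (lt_le_trans eV); apply: ereal_inf_lbound; exists s => //.
apply: Hd => //. rewrite /ball /= sub0r normrN ger0_norm //; exact: ltW.
Qed.

Section Alg.
Context (R : realType) (X : lmodType R) (x y : X).
Local Open Scope ring_scope.
Lemma peq t : x + t *: (y - x) = (1 - t) *: x + t *: y.
Proof. by rewrite scalerBr scalerBl scale1r addrA addrAC. Qed.
Lemma palgL t s : (x + t *: (y - x)) + s *: (x - (x + t *: (y - x)))
   = x + (t - s * t) *: (y - x).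
Proof. by rewrite opprD addrA subrr add0r scalerN scalerA -addrA -scalerBl. Qed.
Lemma palgR t s : (x + t *: (y - x)) + s *: (y - (x + t *: (y - x)))
   = x + (t + s * (1 - t)) *: (y - x).
Proof.
rewrite opprD addrA; move: (y - x) => d.
by rewrite -{2}[d]scale1r -scalerBl scalerA -addrA -scalerDl.
Qed.
Lemma pconv l a b : l *: (x + a *: (y - x)) + (1 - l) *: (x + b *: (y - x))
   = x + (l * a + (1 - l) * b) *: (y - x).
Proof.
move: (y - x) => d.
rewrite !scalerDr !scalerA addrACA -scalerDl -scalerDl.
have -> : l + (1 - l) = 1 by ring.
by rewrite scale1r.
Qed.
End Alg.

Arguments lemK {R X D f}.
Arguments sup_step {R P t0}.
Arguments inf_step {R P t0}.

Lemma mainlem (R : realType) (X : lmodType R) (D : set X) (f : X -> \bar R)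
  (hD : convex_subset D) (hf : forall x, D x -> f x != -oo)
  (hrl : radially_lsc D f) x y r1 r2 (Dx : D x) (Dy : D y)
  (fx : f x = r1%:E) (fy : f y = r2%:E)
  (H2 : forall x y : X, D x -> D y -> exists l : R, (0 < l < 1)%R /\
     f (l *: x + (1 - l) *: y)%R <= l%:E * f x + (1 - l)%:E * f y) :
  forall t : R, (0 <= t <= 1)%R ->
    f (x + t *: (y - x))%R <= (r1 + t * (r2 - r1))%:E.
Proof.
pose p := fun t : R => (x + t *: (y - x))%R.
have pD : forall t, (0 <= t <= 1)%R -> D (p t).
  move=> t /andP[tp0 tp1]; rewrite /p peq.
  have := hD x y (1 - t)%R Dx Dy.
  rewrite (_ : (1 - (1 - t))%R = t); last by ring.
  apply; apply/andP; split; lra.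
pose l := fun t : R => (r1 + t * (r2 - r1))%R.
pose bad := fun t => (l t)%:E < f (p t).
suff H : forall t, (0 <= t <= 1)%R -> ~ bad t.
  by move=> t ht; rewrite leNgt; apply/negP; exact: H.
move=> t0 ht0 Bt0.
have nb0 : ~ bad 0%R by rewrite /bad /p /l scale0r addr0 mul0r addr0 fx ltxx.
have nb1 : ~ bad 1%R.
  rewrite /bad /p /l scale1r mul1r.
  have -> : (x + (y - x))%R = y by rewrite addrC subrK.
  have -> : (r1 + (r2 - r1))%R = r2 by ring.
  by rewrite fy ltxx.
have choose : forall t, (0 <= t <= 1)%R -> bad t ->
    exists2 e : R, (l t < e)%R & e%:E < f (p t).
  move=> t ht; rewrite /bad; case E: (f (p t)) => [r| |].
  - rewrite lte_fin => h; exists ((l t + r) / 2)%R; [lra| rewrite lte_fin; lra].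
  - move=> _; exists (l t + 1)%R; [lra| exact: ltry].
  - by have := hf _ (pD t ht); rewrite E.
have cont : forall t e, (l t < e)%R ->
    exists2 d : R, (0 < d)%R & forall s, (`|s - t| < d)%R -> (l s < e)%R.
  move=> t e hte; pose k := (`|r2 - r1| + 1)%R.
  have k0 : (0 < k)%R by have := normr_ge0 (r2 - r1)%R; rewrite /k; lra.
  exists ((e - l t) / k)%R; first by apply: divr_gt0 => //; lra.
  move=> s hs.
  have h1 : ((s - t) * (r2 - r1) <= `|s - t| * k)%R.
    apply: (le_trans (ler_norm _)); rewrite normrM; apply: ler_wpM2l => //.
    rewrite /k; lra.
  have h2 : (`|s - t| * k < e - l t)%R by rewrite -ltr_pdivlMr.
  have : l s = (l t + (s - t) * (r2 - r1))%R by rewrite /l; ring.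
  lra.
have leftop : forall t, (0 < t <= 1)%R -> bad t ->
    exists2 d : R, (0 < d)%R & forall s, (t - d < s < t)%R -> bad s.
  move=> t /andP[tp0 tp1] Bt.
  have htD : (0 <= t <= 1)%R by rewrite tp1 (ltW tp0).
  have [e le ef] := choose t htD Bt.
  have [d2 d20 H2'] := lemK hrl _ _ _ (pD t htD) Dx ef.
  have [d3 d30 H3] := cont t e le.
  exists (Order.min (d2 * t) d3)%R; first by rewrite lt_min mulr_gt0 // d30.
  move=> s /andP[s1 s2].
  have hm : (t - s < Order.min (d2 * t) d3)%R by lra.
  move: hm; rewrite lt_min => /andP[m1 m2].
  rewrite /bad; apply: (@lt_trans _ _ e%:E).
    rewrite lte_fin; apply: H3; rewrite ltr0_norm ?subr_lt0 //; lra.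
  have := H2' ((t - s) / t)%R; rewrite /p palgL.
  have -> : (t - (t - s) / t * t)%R = s by rewrite divfK ?gt_eqF //; ring.
  apply; apply/andP; split; first by apply: divr_gt0; lra.
  by rewrite ltr_pdivrMr.
have rightop : forall t, (0 <= t < 1)%R -> bad t ->
    exists2 d : R, (0 < d)%R & forall s, (t < s < t + d)%R -> bad s.
  move=> t /andP[tp0 tp1] Bt.
  have htD : (0 <= t <= 1)%R by rewrite tp0 (ltW tp1).
  have [e le ef] := choose t htD Bt.
  have [d2 d20 H2'] := lemK hrl _ _ _ (pD t htD) Dy ef.
  have [d3 d30 H3] := cont t e le.
  have t1' : (0 < 1 - t)%R by lra.
  exists (Order.min (d2 * (1 - t)) d3)%R; first by rewrite lt_min mulr_gt0 // d30.
  move=> s /andP[s1 s2].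
  have hm : (s - t < Order.min (d2 * (1 - t)) d3)%R by lra.
  move: hm; rewrite lt_min => /andP[m1 m2].
  rewrite /bad; apply: (@lt_trans _ _ e%:E).
    rewrite lte_fin; apply: H3; rewrite gtr0_norm ?subr_gt0 //; lra.
  have := H2' ((s - t) / (1 - t))%R; rewrite /p palgR.
  have -> : (t + (s - t) / (1 - t) * (1 - t))%R = s by rewrite divfK ?gt_eqF //; ring.
  apply; apply/andP; split; first by apply: divr_gt0; lra.
  by rewrite ltr_pdivrMr.
move: ht0 => /andP[t00 t01].
have [a [/andP[a0 at0] nPa Ha]] := sup_step t00 nb0 Bt0
  (fun t ht => match andP ht with conj h1 h2 => leftop t (introT andP (conj h1 (le_trans h2 t01))) end).
have [b [/andP[tb b1] nPb Hb]] := inf_step t01 nb1 Bt0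
  (fun t ht => match andP ht with conj h1 h2 => rightop t (introT andP (conj (le_trans t00 h1) h2)) end).
have aD : (0 <= a <= 1)%R by apply/andP; split; lra.
have bD : (0 <= b <= 1)%R by apply/andP; split; lra.
have [lam [/andP[l0 l1] Hl]] := H2 (p a) (p b) (pD a aD) (pD b bD).
pose c := (lam * a + (1 - lam) * b)%R.
have hc : bad c.
  have e1 : (c - a)%R = ((1 - lam) * (b - a))%R by rewrite /c; ring.
  have e2 : (b - c)%R = (lam * (b - a))%R by rewrite /c; ring.
  have p1 : (0 < (1 - lam) * (b - a))%R by apply: mulr_gt0; lra.
  have p2 : (0 < lam * (b - a))%R by apply: mulr_gt0; lra.
  case: (lerP c t0) => hct.
    by apply: Ha; apply/andP; split; lra.
  by apply: Hb; apply/andP; split; lra.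
move: hc; rewrite /bad; apply/negP; rewrite -leNgt.
have -> : p c = (lam *: p a + (1 - lam) *: p b)%R by rewrite /p pconv.
apply: (le_trans Hl).
have -> : (l c)%:E = lam%:E * (l a)%:E + (1 - lam)%:E * (l b)%:E.
  by rewrite -!EFinM -EFinD /l /c; congr EFin; ring.
apply: leeD; apply: lee_wpmul2l.
- by rewrite lee_fin ltW.
- by rewrite leNgt; apply/negP.
- by rewrite lee_fin subr_ge0 ltW.
- by rewrite leNgt; apply/negP.
Qed.

Theorem theorem1 (R : realType) (X : lmodType R) (D : set X) (f : X -> \bar R)
  (hD : convex_subset D) (hf : forall x, D x -> f x != -oo)
  (hrl : radially_lsc D f) :
  (forall (x y : X) (l : R), D x -> D y -> (0 <= l <= 1)%R ->
     f (l *: x + (1 - l) *: y)%R <= l%:E * f x + (1 - l)%:E * f y)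
  <->
  (forall x y : X, D x -> D y -> exists l : R, (0 < l < 1)%R /\
     f (l *: x + (1 - l) *: y)%R <= l%:E * f x + (1 - l)%:E * f y).
Proof.
split.
  move=> H x y Dx Dy; exists (1/2)%R; split; first by apply/andP; split; lra.
  by apply: H => //; apply/andP; split; lra.
move=> H2 x y l Dx Dy /andP[l0 l1].
case Ex: (f x) => [r1| |]; last by have := hf x Dx; rewrite Ex.
- case Ey: (f y) => [r2| |]; last by have := hf y Dy; rewrite Ey.
  + have := @mainlem R X D f hD hf hrl x y r1 r2 Dx Dy Ex Ey H2 (1 - l)%R.
    rewrite peq (_ : (1 - (1 - l))%R = l); last by ring.
    have -> : (l%:E * r1%:E + (1 - l)%:E * r2%:E) = (r1 + (1 - l) * (r2 - r1))%:E.
      by rewrite -!EFinM -EFinD; congr EFin; ring.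
    by apply; apply/andP; split; lra.
  + have [->|l1'] := eqVneq l 1%R.
      by rewrite subrr scale0r addr0 scale1r mul1e mul0e adde0 Ex.
    have hl : (0 < 1 - l)%R by rewrite subr_gt0 lt_neqAle l1' l1.
    by rewrite gt0_muley ?lte_fin // addey ?leey.
- have [->|l0'] := eqVneq l 0%R.
    by rewrite subr0 scale0r add0r scale1r mul0e add0e mul1e.
  have hl : (0 < l)%R by rewrite lt_neqAle eq_sym l0' l0.
  rewrite gt0_muley ?lte_fin // addye ?leey //.
  case Ey: (f y) => [r2| |]; last by have := hf y Dy; rewrite Ey.
    by rewrite -EFinM.
  have [->|l1'] := eqVneq l 1%R; first by rewrite subrr mul0e.
  have hl' : (0 < 1 - l)%R by rewrite subr_gt0 lt_neqAle l1' l1.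
  by rewrite gt0_muley ?lte_fin.
Qed.
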